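(* Let $\lambda>0$, $A\in\mathbb{R}^{m\times n}$ with $m<n$ and $\dim\ker A=n-m$, $b\in\mathbb{R}^m$, let $q=q_1-q_2:\mathbb{R}^m\to[0,+\infty)$ where $q_1:\mathbb{R}^m\to\mathbb{R}$ is continuously differentiable with Lipschitz continuous gradient and $q_2:\mathbb{R}^m\to\mathbb{R}$ is convex and continuous, and let $\mathcal{X}\subseteq\mathbb{R}^n$ be a closed hyperrectangle (possibly unbounded) with $0\in\mathcal{X}$. Set $\Phi(x):=\lambda\frac{\|x\|_1^2}{\|x\|_2^2}+q(Ax-b)$ for $x\neq0$, $\nu^\star:=\inf\{\Phi(x):x\in\mathcal{X}\setminus\{0\}\}$, and assume $\nu^\star<\lambda+q(-b)$. Then the set of optimal solutions $\{x\in\mathcal{X}\setminus\{0\}:\Phi(x)=\nu^\star\}$ is nonempty if one of the following holds: (i) $\mathcal{X}$ is bounded; (ii) $q$ is coercive, $\ker A$ has the $s$-spherical section property for some $s>0$, and there exists $\widetilde{x}\in\mathbb{R}^n$ with $0\neq\widetilde{x}\in\arg\min_{x\in\mathcal{X}}q(Ax-b)$ and $\|\widetilde{x}\|_0<m/s$.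
   Context: A closed hyperrectangle is a set $\{x\in\mathbb{R}^n:\underline{x}\le x\le\overline{x}\}$ with $\underline{x}\in(\mathbb{R}\cup\{-\infty\})^n$, $\overline{x}\in(\mathbb{R}\cup\{+\infty\})^n$. $\|x\|_0$ is the number of nonzero entries of $x$. For positive integers $m<n$, an $(n-m)$-dimensional subspace $V\subseteq\mathbb{R}^n$ has the $s$-spherical section property if $\inf_{v\in V\setminus\{0\}}\|v\|_1/\|v\|_2\ge\sqrt{m/s}$. The inequality $\nu^\star<\lambda+q(-b)$ is a standing assumption of the paper. *)

(* Defs.v *)
From HB Require Import structures.
From mathcomp Require Import all_boot all_order all_algebra.
From mathcomp Require Import all_classical all_reals all_analysis.
Set Implicit Arguments. Unset Strict Implicit. Unset Printing Implicit Defensive.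
Import Order.TTheory GRing.Theory Num.Theory.
Import numFieldNormedType.Exports.
Local Open Scope classical_set_scope.
Local Open Scope ring_scope.

Section Defs.
Variable R : realType.

Definition l1norm n (x : 'cV[R]_n) : R := \sum_(i < n) `|x i 0|.
Definition l2norm n (x : 'cV[R]_n) : R := Num.sqrt (\sum_(i < n) (x i 0) ^+ 2).
Definition l0norm n (x : 'cV[R]_n) : nat := #|[set i : 'I_n | x i 0 != 0]|.

Definition is_hyperrectangle n (X : set 'cV[R]_n) : Prop :=
  exists (lo hi : 'I_n -> \bar R),
    (forall i, lo i != +oo%E) /\ (forall i, hi i != -oo%E) /\
    X = [set x | forall i, (lo i <= (x i 0)%:E <= hi i)%E].

Definition bounded_vset n (X : set 'cV[R]_n) : Prop :=
  exists M : R, forall x, X x -> forall i, `|x i 0| <= M.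

Definition convex_fun m (f : 'cV[R]_m -> R) : Prop :=
  forall x y (t : R), 0 <= t <= 1 ->
    f (t *: x + (1 - t) *: y) <= t * f x + (1 - t) * f y.

(* continuously differentiable with Lipschitz continuous gradient
   (gradient = Frechet derivative 'd f x, Lipschitz in operator norm w.r.t. the
   canonical (sup) norm of 'cV; all norms are equivalent in finite dimension) *)
Definition C1_lipschitz_grad m (f : 'cV[R]_m -> R) : Prop :=
  (forall x, differentiable f x) /\
  (forall v, continuous (fun y => 'd f y v)) /\
  exists L : R, forall x y v, `|'d f x v - 'd f y v| <= L * `|x - y| * `|v|.

Definition coercive m (f : 'cV[R]_m -> R) : Prop :=
  forall M : R, exists r : R, forall y, r <= l2norm y -> M <= f y.

Definition kerA m n (A : 'M[R]_(m, n)) : set 'cV[R]_n := [set v | A *m v = 0].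

Definition spherical_section m n (V : set 'cV[R]_n) (s : R) : Prop :=
  forall v, V v -> v != 0 -> Num.sqrt (m%:R / s) <= l1norm v / l2norm v.

Definition Phi m n (lambda : R) (q : 'cV[R]_m -> R) (A : 'M[R]_(m, n))
  (b : 'cV[R]_m) (x : 'cV[R]_n) : R :=
  lambda * (l1norm x ^+ 2 / l2norm x ^+ 2) + q (A *m x - b).

Definition nu_star m n (lambda : R) (q : 'cV[R]_m -> R) (A : 'M[R]_(m, n))
  (b : 'cV[R]_m) (X : set 'cV[R]_n) : \bar R :=
  ereal_inf [set (Phi lambda q A b x)%:E | x in X `\ 0].

End Defs.

(* Main.v *)
Require Import Defs.
From HB Require Import structures.
From mathcomp Require Import all_boot all_order all_algebra.
From mathcomp Require Import all_classical all_reals all_analysis.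
Import Order.TTheory GRing.Theory Num.Theory.
Import numFieldNormedType.Exports.
Local Open Scope classical_set_scope.
Local Open Scope ring_scope.

From mathcomp Require Import lra ring zify.
Set Implicit Arguments. Unset Strict Implicit. Unset Printing Implicit Defensive.
Section H.
Variable R : realType.

Lemma mxnorm_le (p k : nat) (M : 'M[R]_(p,k)) e :
  0 <= e -> (forall i j, `|M i j| <= e) -> `|M| <= e.
Proof.
move=> e0 H; rewrite (_ : `|M| = mx_norm M) // mx_normrE.
by apply: bigmax_le => // -[i j] _; exact: H.
Qed.

Lemma mxnorm_ge (p k : nat) (M : 'M[R]_(p,k)) i j : `|M i j| <= `|M|.
Proof.
rewrite (_ : `|M| = mx_norm M) // mx_normrE.
exact: (le_bigmax _ _ (i, j)).
Qed.

Lemma mulmx_bound p k (M : 'M[R]_(p,k)) (w : 'cV[R]_k) W i :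
  (forall j, `|w j 0| <= W) -> `|(M *m w) i 0| <= k%:R * (`|M| * W).
Proof.
move=> Hw; rewrite mxE; apply: le_trans (ler_norm_sum _ _ _) _.
apply: le_trans (_ : \sum_(j < k) (`|M| * W) <= _).
  apply: ler_sum => j _; rewrite normrM; apply: ler_pM => //.
  exact: mxnorm_ge.
by rewrite sumr_const card_ord mulr_natl.
Qed.

Lemma sum_cont (T : topologicalType) k (f : 'I_k -> T -> R) :
  (forall i, continuous (f i)) -> continuous (fun x => \sum_(i < k) f i x).
Proof.
elim: k f => [|k IH] f fc x.
  have -> : (fun x => \sum_(i < 0) f i x) = (fun=> 0) by apply/funext => y; rewrite big_ord0.
  exact: cst_continuous.
have -> : (fun x => \sum_(i < k.+1) f i x) =
   (fun x => \sum_(i < k) f (widen_ord (leqnSn k) i) x) + f ord_max.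
  by apply/funext => y; rewrite big_ord_recr.
apply: continuousD; last exact: fc.
by apply: IH => i; exact: fc.
Qed.

Lemma l1_cont n : continuous (@l1norm R n).
Proof.
apply: sum_cont => i x.
exact: (continuous_comp (@coord_continuous _ _ _ i 0 x) (@norm_continuous _ R^o _)).
Qed.

Definition s2 n (x : 'cV[R]_n) : R := \sum_(i < n) (x i 0) ^+ 2.

Lemma s2_cont n : continuous (@s2 n).
Proof.
apply: sum_cont => i x.
have -> : (fun x : 'cV[R]_n => x i 0 ^+ 2) = (fun x => x i 0) \* (fun x => x i 0).
  by apply/funext => y; rewrite expr2.
by apply: continuousM; exact: (@coord_continuous _ _ _ i 0 x).
Qed.

Lemma s2_ge0 n (x : 'cV[R]_n) : 0 <= s2 x.
Proof. by apply: sumr_ge0 => i _; exact: sqr_ge0. Qed.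

Lemma l2normE n (x : 'cV[R]_n) : l2norm x ^+ 2 = s2 x.
Proof. by rewrite /l2norm sqr_sqrtr //; exact: s2_ge0. Qed.

Lemma l1_ge0 n (x : 'cV[R]_n) : 0 <= l1norm x.
Proof. by apply: sumr_ge0 => i _. Qed.

Lemma sq_sum_le k (a : 'I_k -> R) :
  \sum_(i < k) a i ^+ 2 <= (\sum_(i < k) `|a i|) ^+ 2.
Proof.
elim: k a => [|k IH] a; first by rewrite !big_ord0 expr0n.
rewrite !big_ord_recr /=.
set S := \sum_(i < k) `|a _|; set Q := \sum_(i < k) _.
have HQ : Q <= S ^+ 2 by apply: IH.
have S0 : 0 <= S by apply: sumr_ge0.
have := normr_ge0 (a ord_max); rewrite -[a ord_max ^+ 2]real_normK ?num_real //.
move=> ha; nra.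
Qed.

Lemma s2_le_l1 n (x : 'cV[R]_n) : s2 x <= l1norm x ^+ 2.
Proof. exact: (sq_sum_le (fun i => x i 0)). Qed.

Lemma s2_gt0 n (x : 'cV[R]_n) : x != 0 -> 0 < s2 x.
Proof.
move=> x0; have [i xi] : exists i, x i 0 != 0.
  apply/existsP; apply: contraNT x0; rewrite negb_exists => /forallP H.
  by apply/eqP/matrixP => i j; rewrite ord1 mxE; apply/eqP; have := H i; rewrite negbK.
rewrite /s2 (bigD1 i) //=; apply: lt_le_trans (_ : x i 0 ^+ 2 <= _).
  by rewrite lt_def sqrf_eq0 xi sqr_ge0.
by rewrite lerDl; apply: sumr_ge0 => j _; exact: sqr_ge0.
Qed.

Lemma coord_le_norm n (x : 'cV[R]_n) i : `|x i 0| <= `|x|.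
Proof. exact: mxnorm_ge. Qed.

Lemma sq_le_s2 n (x : 'cV[R]_n) i : x i 0 ^+ 2 <= s2 x.
Proof.
rewrite /s2 (bigD1 i) //= lerDl.
by apply: sumr_ge0 => j _; exact: sqr_ge0.
Qed.

Lemma norm_sq_le_s2 n (x : 'cV[R]_n) : `|x| ^+ 2 <= s2 x.
Proof.
rewrite (_ : `|x| = mx_norm x) //.
have [->|x0] := eqVneq (mx_norm x) 0.
  by rewrite expr0n /=; exact: s2_ge0.
have [[i j] /= Hi] := mx_norm_neq0 x0.
by rewrite Hi ord1 real_normK ?num_real //; exact: sq_le_s2.
Qed.

Lemma coord_le_l2 n (x : 'cV[R]_n) i : `|x i 0| <= l2norm x.
Proof.
rewrite -(@ler_pXn2r _ 2) // ?nnegrE ?sqrtr_ge0 // l2normE real_normK ?num_real //.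
exact: sq_le_s2.
Qed.


Lemma cs_sum (I : finType) (S : {set I}) (a : I -> R) :
  (\sum_(i in S) a i) ^+ 2 <= #|S|%:R * \sum_(i in S) a i ^+ 2.
Proof.
set T := \sum_(i in S) a i; set Q := \sum_(i in S) a i ^+ 2.
have H : 0 <= \sum_(i in S) \sum_(j in S) (a i - a j) ^+ 2.
  by apply: sumr_ge0 => i _; apply: sumr_ge0 => j _; exact: sqr_ge0.
have inner i : \sum_(j in S) (a i - a j) ^+ 2 =
    #|S|%:R * a i ^+ 2 - 2 * a i * T + Q.
  rewrite (eq_bigr (fun j => (a i ^+ 2 - 2 * a i * a j) + a j ^+ 2)); last first.
    by move=> j _; rewrite sqrrB; ring.
  rewrite big_split /= sumrB sumr_const -mulr_sumr -/T -/Q.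
  ring.
rewrite (eq_bigr _ (fun i _ => inner i)) in H.
rewrite big_split /= sumrB sumr_const -mulr_sumr -mulr_suml -/Q -/T in H.
rewrite -mulr_sumr -/T -mulr_natl in H.
nra.
Qed.

Lemma l1_cs n (x : 'cV[R]_n) : l1norm x ^+ 2 <= (l0norm x)%:R * s2 x.
Proof.
pose S := [set i : 'I_n | x i 0 != 0]%SET.
have ES : l0norm x = #|S|.
  apply: eq_card => i; rewrite /S inE; apply/idP/idP => [/set_mem //|H]; exact: mem_set.
have E1 : l1norm x = \sum_(i in S) `|x i 0|.
  rewrite /l1norm (bigID (fun i => i \in S)) /= [X in _ + X]big1 ?addr0 //.
  by move=> i; rewrite /S inE negbK => /eqP ->; rewrite normr0.
have E2 : s2 x = \sum_(i in S) `|x i 0| ^+ 2.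
  rewrite /s2 (bigID (fun i => i \in S)) /= [X in _ + X]big1 ?addr0.
    by apply: eq_bigr => i _; rewrite real_normK ?num_real.
  by move=> i; rewrite /S inE negbK => /eqP ->; rewrite expr0n.
rewrite E1 E2 ES; exact: cs_sum.
Qed.

Lemma s2D_le n (v u : 'cV[R]_n) eta : 0 < eta ->
  s2 (v + u) <= (1 + eta) * s2 v + (1 + eta^-1) * s2 u.
Proof.
move=> e0; rewrite /s2 !mulr_sumr -big_split /=; apply: ler_sum => i _.
rewrite mxE.
have h : (1 + eta) * v i 0 ^+ 2 + (1 + eta^-1) * u i 0 ^+ 2 - (v i 0 + u i 0) ^+ 2
   = (eta * v i 0 - u i 0) ^+ 2 / eta.
  by field; rewrite gt_eqF.
rewrite -subr_ge0 h; apply: divr_ge0; [exact: sqr_ge0 | exact: ltW].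
Qed.

Lemma l1D_ge n (v u : 'cV[R]_n) : l1norm v - l1norm u <= l1norm (v + u).
Proof.
rewrite /l1norm -sumrB; apply: ler_sum => i _; rewrite mxE.
have := ler_normD (v i 0 + u i 0) (- u i 0); rewrite addrK normrN; lra.
Qed.

Lemma lip_cont (U V : normedModType R) (f : U -> V) C :
  (forall x y, `|f x - f y| <= C * `|x - y|) -> continuous f.
Proof.
move=> H x; apply/cvgrPdist_lt => e e0.
have d0 : 0 < e / (`|C| + 1) by apply: divr_gt0 => //; rewrite ltr_wpDl.
near=> y.
have Hy : `|x - y| < e / (`|C| + 1).
  by near: y; apply: (@cvgr_dist_lt _ _ _ _ _ (@id U) x) => //; exact: cvg_id.
apply: (le_lt_trans (H x y)).
apply: (@le_lt_trans _ _ (`|C| * `|x - y|)).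
  by apply: ler_wpM2r => //; exact: ler_norm.
rewrite ltr_pdivlMr ?ltr_wpDl // in Hy.
have := normr_ge0 C; have := normr_ge0 (x - y); nra.
Unshelve. all: by end_near.
Qed.

Lemma aff_cont m n (A : 'M[R]_(m, n)) (b : 'cV[R]_m) :
  continuous (fun x : 'cV[R]_n => A *m x - b).
Proof.
apply: (@lip_cont _ _ _ (n%:R * `|A|)) => x y.
rewrite opprB addrA subrK -mulmxBr.
apply: mxnorm_le; first by apply: mulr_ge0 => //; apply: mulr_ge0.
move=> i j; rewrite ord1 -mulrA; apply: mulmx_bound => k.
exact: coord_le_norm.
Qed.

Lemma hyper_closed n (X : set 'cV[R]_n) : is_hyperrectangle X -> closed X.
Proof.
move=> [lo [hi [hlo [hhi HX]]]].
have -> : X =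
  \bigcap_(i in setT) ([set x : 'cV[R]_n | (lo i <= (x i 0)%:E)%E] `&`
                       [set x : 'cV[R]_n | ((x i 0)%:E <= hi i)%E]).
  rewrite HX; apply/seteqP; split => x /=.
    by move=> H i _; have /andP[] := H i.
  by move=> H i; have [] := H i I => -> ->.
apply: closed_bigI => i _; apply: closedI.
  have := hlo i; case: (lo i) => [l| |] // _.
    have -> : [set x : 'cV[R]_n | (l%:E <= (x i 0)%:E)%E] =
        (fun x : 'cV[R]_n => x i 0) @^-1` [set r | l <= r].
      by apply/seteqP; split => x /=; rewrite lee_fin.
    apply: preimage_closed; last exact: closed_ge.
    move=> x _; exact: (@coord_continuous _ _ _ i 0 x).
  have -> : [set x : 'cV[R]_n | (-oo <= (x i 0)%:E)%E] = setT.
    by apply/seteqP; split => x //= _; exact: leNye.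
  exact: closedT.
have := hhi i; case: (hi i) => [l| |] // _.
  have -> : [set x : 'cV[R]_n | ((x i 0)%:E <= l%:E)%E] =
      (fun x : 'cV[R]_n => x i 0) @^-1` [set r | r <= l].
    by apply/seteqP; split => x /=; rewrite lee_fin.
  apply: preimage_closed; last exact: closed_le.
  move=> x _; exact: (@coord_continuous _ _ _ i 0 x).
have -> : [set x : 'cV[R]_n | ((x i 0)%:E <= +oo)%E] = setT.
  by apply/seteqP; split => x //= _; exact: leey.
exact: closedT.
Qed.

Lemma cV_compact n (K : set 'cV[R]_n) B :
  (forall x, K x -> `|x| <= B) -> closed K -> compact K.
Proof.
move=> KB Kc.
pose K' := [set y : 'rV[R]_n | K y^T].
have tr_cont p q : continuous (fun y : 'M[R]_(p, q) => y^T).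
  apply: (@lip_cont _ _ _ 1) => x y; rewrite mul1r.
  apply: mxnorm_le => // i j; rewrite !mxE.
  have := mxnorm_ge (x - y) j i; rewrite !mxE; exact.
have -> : K = (fun y : 'rV[R]_n => y^T) @` K'.
  apply/seteqP; split => x /=.
    by move=> Kx; exists x^T; rewrite /K' /= trmxK.
  by move=> [y Ky <-].
apply: (@continuous_compact _ _ (fun y : 'rV[R]_n => y^T)).
  by apply: continuous_subspaceT; exact: tr_cont.
apply: bounded_closed_compact.
  exists B; split; first exact: num_real.
  move=> M BM y /= Ky; apply: mxnorm_le.
    by apply: le_trans (ltW BM); apply: le_trans (KB _ Ky).
  move=> i j; apply: le_trans (ltW BM); apply: le_trans (KB _ Ky).
  by have := mxnorm_ge y^T j i; rewrite mxE.
have -> : K' = (fun y : 'rV[R]_n => y^T) @^-1` K by [].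
apply: preimage_closed => // y _; exact: tr_cont.
Qed.

End H.

Section H2.
Variable R : realType.

Lemma sq_le (x y : R) : 0 <= x -> x <= y -> x ^+ 2 <= y ^+ 2.
Proof. move=> x0 xy; nra. Qed.

Lemma sq_le_inv (x y : R) : 0 <= y -> x ^+ 2 <= y ^+ 2 -> x <= y.
Proof. move=> y0 h; case: (leP x y) => // yx; nra. Qed.

Lemma ratio_large m n (A : 'M[R]_(m, n)) (P : 'M[R]_(n, m)) (sig rho W : R) :
  A *m P = 1%:M -> 0 < rho -> rho < sig -> 0 <= W ->
  (forall v, A *m v = 0 -> sig * s2 v <= l1norm v ^+ 2) ->
  exists M, forall x, (forall j, `|(A *m x) j 0| <= W) -> M < `|x| ->
    rho * s2 x <= l1norm x ^+ 2.
Proof.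
move=> AP r0 rs W0 sph.
have s0 : 0 < sig by apply: lt_trans rs.
pose B := m%:R * (`|P| * W).
have B0 : 0 <= B by apply: mulr_ge0 => //; apply: mulr_ge0.
pose D := n%:R * B; pose K := n%:R * B ^+ 2.
have D0 : 0 <= D by apply: mulr_ge0.
have K0 : 0 <= K by apply: mulr_ge0 => //; exact: sqr_ge0.
pose eta := (sig - rho) / (2 * (sig + rho)).
have eta0 : 0 < eta by apply: divr_gt0; [rewrite subr_gt0 | apply: mulr_gt0 => //; apply: addr_gt0].
have eta1 : eta < 1.
  rewrite /eta ltr_pdivrMr; last by apply: mulr_gt0 => //; apply: addr_gt0.
  lra.
have keyid : (1 - eta) * sig - (1 + eta) * rho = (sig - rho) / 2.
  by rewrite /eta; field; rewrite gt_eqF // addr_gt0.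
pose T0 := 2 * (D ^+ 2 / eta + rho * (1 + eta^-1) * K) / (sig - rho).
have T00 : 0 <= T0.
  apply: divr_ge0; last by rewrite subr_ge0 ltW.
  apply: mulr_ge0 => //; apply: addr_ge0.
    by apply: divr_ge0; [exact: sqr_ge0 | exact: ltW].
  apply: mulr_ge0 => //; apply: mulr_ge0; first exact: ltW.
  by apply: addr_ge0 => //; rewrite invr_ge0 ltW.
pose T1 := T0 + D ^+ 2 / sig.
have T10 : T0 <= T1 by rewrite lerDl divr_ge0 // ?sqr_ge0 // ltW.
have T11 : D ^+ 2 / sig <= T1 by rewrite lerDr.
exists (B + T1 + 1) => x HAx Mx.
pose u := P *m (A *m x); pose v := x - u.
have Av : A *m v = 0.
  by rewrite /v /u mulmxBr !mulmxA AP mul1mx subrr.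
have ub i : `|u i 0| <= B by apply: mulmx_bound.
have unorm : `|u| <= B by apply: mxnorm_le => // i j; rewrite ord1; exact: ub.
have xE : x = v + u by rewrite /v subrK.
have vnorm : T1 + 1 < `|v|.
  have := ler_normD v u; rewrite -xE; lra.
set T := s2 v.
have T1T : T1 <= T.
  apply: le_trans (norm_sq_le_s2 v).
  have h1 : 0 <= T1 := le_trans T00 T10.
  have : (T1 + 1) ^+ 2 <= `|v| ^+ 2.
    apply: sq_le; [lra | exact: ltW].
  nra.
set a := l1norm v.
have a0 : 0 <= a by exact: l1_ge0.
have aT : sig * T <= a ^+ 2 by exact: sph.
have aD : D <= a.
  have : D ^+ 2 <= a ^+ 2.
    have -> : D ^+ 2 = sig * (D ^+ 2 / sig) by field; rewrite gt_eqF.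
    apply: le_trans _ aT; apply: ler_wpM2l; [exact: ltW | exact: le_trans T11 T1T].
  by apply: sq_le_inv.
have l1u : l1norm u <= D.
  apply: (@le_trans _ _ (\sum_(i < n) B)); first by apply: ler_sum => i _; exact: ub.
  by rewrite sumr_const card_ord /D mulr_natl.
have s2u : s2 u <= K.
  apply: (@le_trans _ _ (\sum_(i < n) B ^+ 2)); last by rewrite sumr_const card_ord /K mulr_natl.
  apply: ler_sum => i _.
  rewrite -real_normK ?num_real //; apply: sq_le => //; exact: ub.
have l1x : a - D <= l1norm x.
  have := l1D_ge v u; rewrite -xE -/a; lra.
have s2x : s2 x <= (1 + eta) * T + (1 + eta^-1) * K.
  rewrite xE; apply: le_trans (s2D_le v u eta0) _.
  rewrite lerD2l; apply: ler_wpM2l => //; apply: addr_ge0 => //; rewrite invr_ge0 ltW //.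
have sq1 : (a - D) ^+ 2 <= l1norm x ^+ 2.
  by apply: sq_le => //; rewrite subr_ge0.
have sq2 : (1 - eta) * a ^+ 2 - D ^+ 2 / eta <= (a - D) ^+ 2.
  rewrite -subr_ge0.
  have -> : (a - D) ^+ 2 - ((1 - eta) * a ^+ 2 - D ^+ 2 / eta)
     = (eta * a - D) ^+ 2 / eta + D ^+ 2.
    by field; rewrite gt_eqF.
  by apply: addr_ge0; [apply: divr_ge0; [exact: sqr_ge0|exact: ltW]|exact: sqr_ge0].
have T0T : T0 <= T by apply: le_trans T1T.
have hT0 : (sig - rho) / 2 * T0 = D ^+ 2 / eta + rho * (1 + eta^-1) * K.
  by rewrite /T0; field; rewrite gt_eqF // gt_eqF // subr_gt0.
apply: le_trans sq1; apply: le_trans sq2.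
apply: le_trans (ler_wpM2l (ltW r0) s2x) _.
have h3 : (1 - eta) * (sig * T) <= (1 - eta) * a ^+ 2.
  by apply: ler_wpM2l => //; rewrite subr_ge0 ltW.
have h4 : (sig - rho) / 2 * T0 <= (sig - rho) / 2 * T.
  by apply: ler_wpM2l => //; apply: divr_ge0 => //; rewrite subr_ge0 ltW.
rewrite hT0 in h4.
have h5 : (sig - rho) / 2 * T = (1 - eta) * (sig * T) - (1 + eta) * rho * T.
  by rewrite -keyid; ring.
rewrite h5 in h4.
have -> : rho * ((1 + eta) * T + (1 + eta^-1) * K) =
   (1 + eta) * rho * T + rho * (1 + eta^-1) * K by ring.
lra.
Qed.

End H2.

Section H3.
Variable R : realType.

Lemma Phi_ge m n (lambda : R) (q : 'cV[R]_m -> R) (A : 'M[R]_(m, n)) b x :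
  0 < lambda -> x != 0 -> lambda + q (A *m x - b) <= Phi lambda q A b x.
Proof.
move=> l0 x0; rewrite /Phi l2normE lerD2r ler_pMr // ler_pdivlMr ?s2_gt0 // mul1r.
exact: s2_le_l1.
Qed.

Lemma Phi_cont m n (lambda : R) (q : 'cV[R]_m -> R) (A : 'M[R]_(m, n)) b x :
  continuous q -> x != 0 -> {for x, continuous (Phi lambda q A b)}.
Proof.
move=> qc x0.
have -> : Phi lambda q A b = (fun=> lambda) \* ((@l1norm R n \* @l1norm R n) \* (fun y => (s2 y)^-1))
   + (q \o (fun y => A *m y - b)).
  by apply/funext => y /=; rewrite /Phi l2normE expr2.
apply: continuousD.
  apply: continuousM; first exact: cst_continuous.
  apply: continuousM; first by apply: continuousM; exact: l1_cont.
  by apply: continuousV; [rewrite gt_eqF // s2_gt0 | exact: s2_cont].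
apply: continuous_comp; [exact: aff_cont | exact: qc].
Qed.

Lemma sph_sq m n (A : 'M[R]_(m, n)) s : 0 < s -> spherical_section m (kerA A) s ->
  forall v, A *m v = 0 -> m%:R / s * s2 v <= l1norm v ^+ 2.
Proof.
move=> s0 hs v Av.
have [->|v0] := eqVneq v 0.
  rewrite /s2 big1 ?mulr0 ?sqr_ge0 // => i _; rewrite mxE expr0n.
  by [].
have h := hs v Av v0.
have sg0 : 0 <= m%:R / s by apply: divr_ge0 => //; exact: ltW.
have := sq_le (sqrtr_ge0 _) h; rewrite sqr_sqrtr // expr_div_n l2normE.
by rewrite ler_pdivlMr ?s2_gt0.
Qed.

Lemma case_ii m n (lambda : R) (A : 'M[R]_(m, n)) (b : 'cV[R]_m) (q : 'cV[R]_m -> R)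
  (X : set 'cV[R]_n) (P : 'M[R]_(n, m)) :
  0 < lambda -> A *m P = 1%:M -> (forall y, 0 <= q y) ->
  coercive q ->
  forall s : R, 0 < s -> spherical_section m (kerA A) s ->
  forall xt : 'cV[R]_n, xt != 0 -> X xt ->
    (forall x, X x -> q (A *m xt - b) <= q (A *m x - b)) ->
    (l0norm xt)%:R < m%:R / s ->
  exists M c2, Phi lambda q A b xt < c2 /\
    forall x, X x -> x != 0 -> M < `|x| -> c2 <= Phi lambda q A b x.
Proof.
move=> l0 AP qnn hcoer s s0 hsph xt xt0 Xxt xtmin hl0.
set qmin := q (A *m xt - b).
set sig := m%:R / s.
have hxt : Phi lambda q A b xt <= lambda * sig + qmin - (lambda * (sig - (l0norm xt)%:R)).
  rewrite /Phi l2normE.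
  have : l1norm xt ^+ 2 / s2 xt <= (l0norm xt)%:R.
    by rewrite ler_pdivrMr ?s2_gt0 //; exact: l1_cs.
  move=> h; have := ler_wpM2l (ltW l0) h; rewrite -/qmin; lra.
have gap : 0 < lambda * (sig - (l0norm xt)%:R) by apply: mulr_gt0 => //; rewrite subr_gt0.
pose U := lambda * sig + qmin.
pose c2 := (Phi lambda q A b xt + U) / 2.
have c2a : Phi lambda q A b xt < c2 by rewrite /c2 /U; lra.
have c2b : c2 < U by rewrite /c2 /U; lra.
have [r hr] := hcoer c2.
pose W := `|r| + `|b|.
have W0 : 0 <= W by apply: addr_ge0.
have sig0 : 0 < sig.
  by apply: le_lt_trans hl0.
pose rho := Num.max ((c2 - qmin) / lambda) (sig / 2).
have rho0 : 0 < rho by rewrite /rho lt_max; apply/orP; right; apply: divr_gt0.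
have rhos : rho < sig.
  rewrite /rho gt_max; apply/andP; split.
    by rewrite ltr_pdivrMr // mulrC; rewrite /U in c2b; lra.
  lra.
have [M HM] := ratio_large AP rho0 rhos W0 (sph_sq s0 hsph).
exists M, c2; split => // x Xx x0 Mx.
have hq := xtmin x Xx; rewrite -/qmin in hq.
have hP := Phi_ge q A b l0 x0.
case: (leP c2 (q (A *m x - b))) => hc.
  have : 0 <= lambda := ltW l0.
  lra.
have hl2 : l2norm (A *m x - b) < r.
  by rewrite ltNge; apply/negP => /hr; rewrite leNgt hc.
have HAx : forall j, `|(A *m x) j 0| <= W.
  move=> j.
  have e : (A *m x) j 0 = (A *m x - b) j 0 + b j 0 by rewrite !mxE subrK.
  rewrite e; apply: le_trans (ler_normD _ _) _.
  apply: lerD; last exact: coord_le_norm.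
  apply: le_trans (coord_le_l2 _ _) _.
  apply: le_trans (ltW hl2) _; exact: ler_norm.
have hr2 := HM x HAx Mx.
have hx2 : rho <= l1norm x ^+ 2 / s2 x.
  by rewrite ler_pdivlMr ?s2_gt0 // mulrC.
have hx3 : (c2 - qmin) / lambda <= l1norm x ^+ 2 / s2 x.
  by apply: le_trans hx2; rewrite /rho le_max lexx.
rewrite /Phi l2normE.
have := ler_wpM2l (ltW l0) hx3.
rewrite mulrCA divff ?gt_eqF // mulr1.
lra.
Qed.

Lemma main_aux (m n : nat) (lambda : R)
  (A : 'M[R]_(m, n)) (b : 'cV[R]_m) (q1 q2 : 'cV[R]_m -> R)
  (X : set 'cV[R]_n) :
  0 < lambda ->
  (m < n)%N ->
  \rank (kermx A^T) = (n - m)%N ->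
  C1_lipschitz_grad q1 ->
  convex_fun q2 -> continuous q2 ->
  (forall y, 0 <= q1 y - q2 y) ->
  is_hyperrectangle X -> X 0 ->
  (nu_star lambda (fun y => (q1 y - q2 y)%R) A b X
     < (lambda + (q1 (- b) - q2 (- b)))%R%:E)%E ->
  (bounded_vset X \/
   (coercive (fun y => q1 y - q2 y) /\
    exists s : R, 0 < s /\ spherical_section m (kerA A) s /\
    exists xt : 'cV[R]_n, xt != 0 /\ X xt /\
      (forall x, X x -> q1 (A *m xt - b) - q2 (A *m xt - b)
                         <= q1 (A *m x - b) - q2 (A *m x - b)) /\
      (l0norm xt)%:R < m%:R / s)) ->
  exists x, X x /\ x != 0 /\
    ((Phi lambda (fun y => q1 y - q2 y) A b x)%:E
       = nu_star lambda (fun y => q1 y - q2 y) A b X).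
Proof.
move=> l0 mn hrank hC1 _ q2c hqnn hX X0 hnu hcase.
set q := (fun y => q1 y - q2 y) in hnu hcase *.
have qnn : forall y, 0 <= q y := hqnn.
set nu := nu_star lambda q A b X in hnu *.
set Ph := Phi lambda q A b.
have qc : continuous q.
  move=> y; apply: continuousB; last exact: q2c.
  apply: differentiable_continuous; exact: hC1.1.
have nulb : forall x, X x -> x != 0 -> (nu <= (Ph x)%:E)%E.
  move=> x Xx x0; apply: ereal_inf_lbound; exists x => //; split => //.
  by move=> /= x00; rewrite x00 eqxx in x0.
set L := lambda + q (- b).
have [_ [x1 [X1 x10] <-] Px1] := ereal_inf_lt hnu.
have {}x10 : x1 != 0 by apply/eqP.
rewrite lte_fin -/Ph (_ : lambda + (q1 (- b) - q2 (- b)) = L) // in Px1.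
pose w := (Ph x1 + L) / 2.
have wL : w < L by rewrite /w; lra.
have nuw : (nu < w%:E)%E.
  apply: le_lt_trans (nulb _ X1 x10) _; rewrite lte_fin /w; lra.
have [dl dl0 Hdl] : exists2 dl : R, 0 < dl &
    forall x, X x -> x != 0 -> `|x| < dl -> w < Ph x.
  have hc : {for 0, continuous (q \o (fun x : 'cV[R]_n => A *m x - b))}.
    apply: continuous_comp; [exact: aff_cont | exact: qc].
  have Lw : 0 < L - w by rewrite subr_gt0.
  have Hn : \forall t \near (0 : 'cV[R]_n), `|(q \o (fun x : 'cV[R]_n => A *m x - b)) 0 - (q \o (fun x : 'cV[R]_n => A *m x - b)) t| < L - w.
    by apply: (@cvgr_dist_lt _ _ _ _ _ _ _ hc _ Lw).

  have [dl dl0 Hdl] := (@nbhs_normP _ _ (0 : 'cV[R]_n) _).1 Hn; exists dl => // x Xx x0 xdl.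
  have := Hdl x; rewrite /ball_ /= sub0r normrN => /(_ xdl).
  rewrite mulmx0 sub0r => hd.
  have := Phi_ge q A b l0 x0; rewrite -/Ph.
  have := ler_norm (q (- b) - q (A *m x - b)).
  rewrite /L in hd; lra.
have [M [c2 [nuc2 HM]]] : exists M c2, (nu < c2%:E)%E /\
    forall x, X x -> x != 0 -> M < `|x| -> c2 <= Ph x.
  case: hcase => [[M0 HM0]|[hcoer [s [s0 [hsph [xt [xt0 [Xxt [xtmin hl0]]]]]]]]].
    exists M0, w; split => // x Xx x0 Mx.
    have M00 : 0 <= M0 by have := HM0 0 X0 (Ordinal (leq_ltn_trans (leq0n m) mn)); rewrite mxE normr0.
    have : `|x| <= M0 by apply: mxnorm_le => // i j; rewrite ord1; exact: HM0.
    lra.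
  have : \rank A = m.
    rewrite mxrank_ker mxrank_tr in hrank.
    have := rank_leq_row A; lia.
  move=> rA.
  have /row_freeP [P AP] : row_free A by rewrite /row_free rA.
  have [M [c2 [h1 h2]]] := case_ii l0 AP qnn hcoer s0 hsph xt0 Xxt xtmin hl0.
  exists M, c2; split => //.
  by apply: le_lt_trans (nulb _ Xxt xt0) _; rewrite lte_fin.
pose K := X `&` ((fun x : 'cV[R]_n => `|x|) @^-1` [set r | dl <= r])
              `&` ((fun x : 'cV[R]_n => `|x|) @^-1` [set r | r <= M]).
pose c := Num.min w c2.
have nuc : (nu < c%:E)%E.
  by rewrite /c minEle; case: ifP.
have [_ [x2 [X2 x20] <-] Px2] := ereal_inf_lt nuc.
have {}x20 : x2 != 0 by apply/eqP.
rewrite lte_fin -/Ph in Px2.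
have cw : c <= w by rewrite /c ge_min lexx.
have cc2 : c <= c2 by rewrite /c ge_min lexx orbT.
have outK : forall y, X y -> y != 0 -> ~ K y -> c <= Ph y.
  move=> y Xy y0 Ky.
  case: (leP dl `|y|) => h1.
    case: (leP `|y| M) => h2.
      by exfalso; apply: Ky; split; [split|].
    exact: le_trans cc2 (HM y Xy y0 h2).
  exact: le_trans cw (ltW (Hdl y Xy y0 h1)).
have K2 : K x2.
  apply: contrapT => Kn; have := outK x2 X2 x20 Kn; lra.
have Kcpt : compact K.
  apply: (@cV_compact _ _ K M); first by move=> x [[_ _] ?].
  apply: closedI; [apply: closedI|].
  - exact: hyper_closed.
  - apply: preimage_closed; last exact: closed_ge.
    by move=> x _; exact: norm_continuous.
  - apply: preimage_closed; last exact: closed_le.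
    by move=> x _; exact: norm_continuous.
have Kc : {within K, continuous Ph}.
  apply: continuous_in_subspaceT => x /set_mem [[_ h1] _].
  apply: Phi_cont => //; apply/eqP => x0; have h1' : dl <= `|x| := h1; rewrite x0 normr0 in h1'; lra.
have [x0 /set_mem K0 Hmin] := compact_EVT_min (ex_intro _ x2 K2) Kcpt Kc.
case: (K0) => [[X0' d0] _].
have x00 : x0 != 0 by apply/eqP => e; have d1 : dl <= `|x0| := d0; rewrite e normr0 in d1; lra.
exists x0; split => //; split => //.
apply/le_anti/andP; split; last exact: nulb.
apply: le_ereal_inf_tmp => _ [y [Xy y0] <-].
have {}y0 : y != 0 by apply/eqP.
rewrite lee_fin.
have hx2 : Ph x0 <= Ph x2 by apply: Hmin; exact: mem_set.
case: (pselect (K y)) => Ky; first by apply: Hmin; exact: mem_set.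
have := outK y Xy y0 Ky; rewrite -/Ph; lra.
Qed.

End H3.

Unset Implicit Arguments.

Theorem theorem3p1 (R : realType) (m n : nat) (lambda : R)
  (A : 'M[R]_(m, n)) (b : 'cV[R]_m) (q1 q2 : 'cV[R]_m -> R)
  (X : set 'cV[R]_n) :
  0 < lambda ->
  (m < n)%N ->
  \rank (kermx A^T) = (n - m)%N ->
  C1_lipschitz_grad q1 ->
  convex_fun q2 -> continuous q2 ->
  (forall y, 0 <= q1 y - q2 y) ->
  is_hyperrectangle X -> X 0 ->
  (nu_star lambda (fun y => (q1 y - q2 y)%R) A b X
     < (lambda + (q1 (- b) - q2 (- b)))%R%:E)%E ->
  (bounded_vset X \/
   (coercive (fun y => q1 y - q2 y) /\
    exists s : R, 0 < s /\ spherical_section m (kerA A) s /\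
    exists xt : 'cV[R]_n, xt != 0 /\ X xt /\
      (forall x, X x -> q1 (A *m xt - b) - q2 (A *m xt - b)
                         <= q1 (A *m x - b) - q2 (A *m x - b)) /\
      (l0norm xt)%:R < m%:R / s)) ->
  exists x, X x /\ x != 0 /\
    ((Phi lambda (fun y => q1 y - q2 y) A b x)%:E
       = nu_star lambda (fun y => q1 y - q2 y) A b X).
Proof. exact: main_aux. Qed.
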